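(* Let $\tilde\sigma=(g_1,\dots,g_T)\in\Sigma$, let $\tau\in[T-1]$, and let $\bar\sigma$ be the input obtained from $\tilde\sigma$ by interchanging $g_\tau$ and $g_{\tau+1}$. Then $$\eta_{OPT}(\tilde\sigma^{[1:\tau]})-\eta_{OPT}(\tilde\sigma^{[1:\tau-1]})\ \ge\ \eta_{OPT}(\bar\sigma^{[1:\tau+1]})-\eta_{OPT}(\bar\sigma^{[1:\tau]}).$$
   Context: Fix $\Delta>0$ and $0<m\le M$. Let $\mathcal G$ be the family of all functions $g:[0,\Delta]\to\mathbb{R}$ that are concave, increasing and differentiable on $[0,\Delta]$ with $g(0)=0$ and $g'(0)\in[m,M]$. An input is a finite sequence $\sigma=(g_1,\dots,g_T)$, $T\ge1$, $g_t\in\mathcal G$; $\Sigma$ is the set of all inputs. For $0\le t\le T$, $\sigma^{[1:t]}=(g_1,\dots,g_t)$ ($\sigma^{[1:0]}$ is empty). $\eta_{OPT}(\sigma^{[1:t]})$ denotes the optimal value of $\max\sum_{s=1}^t g_s(v_s)$ subject to $\sum_{s=1}^t v_s\le\Delta$, $v_s\ge0$; $\eta_{OPT}$ of the empty sequence is $0$. *)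

(* Defs.v *)
From Stdlib Require Import Reals List ClassicalEpsilon.
Import ListNotations.
Open Scope R_scope.

Definition deriv_in (D : R) (g : R -> R) (x l : R) : Prop :=
  forall eps, 0 < eps -> exists delta, 0 < delta /\
    forall h, h <> 0 -> Rabs h < delta -> 0 <= x + h <= D ->
      Rabs ((g (x + h) - g x) / h - l) < eps.

Definition concave_on (D : R) (g : R -> R) : Prop :=
  forall x y t, 0 <= x <= D -> 0 <= y <= D -> 0 <= t <= 1 ->
    t * g x + (1 - t) * g y <= g (t * x + (1 - t) * y).

Definition increasing_on (D : R) (g : R -> R) : Prop :=
  forall x y, 0 <= x <= D -> 0 <= y <= D -> x <= y -> g x <= g y.

(* The family G (only the values on [0, D] matter). *)
Definition inG (D m M : R) (g : R -> R) : Prop :=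
  concave_on D g /\ increasing_on D g /\
  (forall x, 0 <= x <= D -> exists l, deriv_in D g x l) /\
  g 0 = 0 /\
  (exists l, deriv_in D g 0 l /\ m <= l <= M).

Definition objective (gs : list (R -> R)) (v : list R) : R :=
  fold_right (fun p acc => fst p (snd p) + acc) 0 (combine gs v).

Definition feasible_values (D : R) (gs : list (R -> R)) (y : R) : Prop :=
  exists v : list R, length v = length gs /\ Forall (fun a => 0 <= a) v /\
    fold_right Rplus 0 v <= D /\ y = objective gs v.

(* Optimal value: the supremum (= maximum, which is attained) of the feasible
   objective values. For the empty sequence this is 0. *)
Definition eta_OPT (D : R) (gs : list (R -> R)) : R :=
  epsilon (inhabits 0) (fun l => is_lub (feasible_values D gs) l).

(* Interchange of the elements in (1-indexed) positions tau and tau+1. *)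
Definition swap_at (tau : nat) (l : list (R -> R)) : list (R -> R) :=
  firstn (tau - 1) l ++ [nth tau l (fun _ => 0); nth (tau - 1) l (fun _ => 0)]
    ++ skipn (tau + 1) l.

(* Main.v *)
Require Import Defs.
From Stdlib Require Import Reals List.
From Stdlib Require Import ClassicalEpsilon Lra Lia.
Import ListNotations.
Open Scope R_scope.

Definition sumR (v : list R) := fold_right Rplus 0 v.

Fixpoint comb (l : R) (x y : list R) : list R :=
  match x, y with
  | a :: x', b :: y' => (l * a + (1 - l) * b) :: comb l x' y'
  | _, _ => []
  end.

Lemma comb_length l x y : length x = length y -> length (comb l x y) = length x.
Proof. revert y; induction x as [|a x IH]; intros [|b y] H; simpl in *; try lia.
  f_equal. apply IH. lia. Qed.

Lemma comb_sum l x y : length x = length y ->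
  sumR (comb l x y) = l * sumR x + (1 - l) * sumR y.
Proof. revert y; induction x as [|a x IH]; intros [|b y] H; simpl in *; try lia.
  - unfold sumR; simpl; ring.
  - unfold sumR in *; simpl. rewrite IH by lia. ring. Qed.

Lemma comb_nonneg l x y : 0 <= l <= 1 -> Forall (fun a => 0 <= a) x ->
  Forall (fun a => 0 <= a) y -> Forall (fun a => 0 <= a) (comb l x y).
Proof. intros Hl Hx; revert y; induction Hx as [|a x Ha Hx IH]; intros [|b y] Hy;
  simpl; constructor; inversion Hy; subst.
  - nra.
  - apply IH; auto. Qed.

Lemma sumR_nonneg v : Forall (fun a => 0 <= a) v -> 0 <= sumR v.
Proof. induction 1; unfold sumR in *; simpl; lra. Qed.

Lemma bounded_entries D v : Forall (fun a => 0 <= a) v -> sumR v <= D ->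
  Forall (fun a => 0 <= a <= D) v.
Proof. induction 1 as [|a v Ha Hv IH]; intros Hs; constructor.
  - pose proof (sumR_nonneg v Hv). unfold sumR in *; simpl in Hs. lra.
  - apply IH. pose proof (sumR_nonneg v Hv). unfold sumR in *; simpl in Hs. lra. Qed.

Lemma obj_cons g A v vs : objective (g :: A) (v :: vs) = g v + objective A vs.
Proof. reflexivity. Qed.

Lemma obj_app A B x y : length x = length A ->
  objective (A ++ B) (x ++ y) = objective A x + objective B y.
Proof. revert x; induction A as [|g A IH]; intros [|v x] H; simpl in *; try lia.
  - unfold objective; simpl; ring.
  - rewrite !obj_cons. rewrite IH by lia. ring. Qed.

Lemma sumR_app x y : sumR (x ++ y) = sumR x + sumR y.
Proof. induction x; unfold sumR in *; simpl; lra. Qed.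

Lemma comb_obj D A l : 0 <= l <= 1 -> Forall (concave_on D) A -> forall x y,
  length x = length A -> length y = length A ->
  Forall (fun a => 0 <= a <= D) x -> Forall (fun a => 0 <= a <= D) y ->
  objective A x + objective A y <= objective A (comb l x y) + objective A (comb (1 - l) x y).
Proof. intros Hl HA; induction HA as [|g A Hg HA IH]; intros [|a x] [|b y] Hx Hy Fx Fy;
  simpl in *; try lia.
  - unfold objective; simpl; lra.
  - inversion Fx; inversion Fy; subst. rewrite !obj_cons.
    pose proof (IH x y ltac:(lia) ltac:(lia) ltac:(assumption) ltac:(assumption)).
    pose proof (Hg a b l ltac:(assumption) ltac:(assumption) Hl).
    pose proof (Hg a b (1 - l) ltac:(assumption) ltac:(assumption) ltac:(lra)).
    replace (1 - (1 - l)) with l in * by ring. lra. Qed.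

Lemma obj_bound D gs : Forall (increasing_on D) gs -> forall v,
  Forall (fun a => 0 <= a <= D) v ->
  objective gs v <= fold_right (fun g acc => Rmax 0 (g D) + acc) 0 gs.
Proof. induction 1 as [|g gs Hg Hgs IH]; intros [|a v] Fv; simpl.
  - unfold objective; simpl; lra.
  - unfold objective; simpl; lra.
  - unfold objective; simpl. pose proof (IH [] (Forall_nil _)) as H.
    unfold objective in H; rewrite combine_nil in H; simpl in H. pose proof (Rmax_l 0 (g D)). lra.
  - inversion Fv; subst. rewrite obj_cons. pose proof (IH v ltac:(assumption)).
    pose proof (Hg a D ltac:(assumption) ltac:(lra) ltac:(lra)).
    pose proof (Rmax_r 0 (g D)). lra.
Qed.

Lemma eta_lub D gs : 0 <= D -> Forall (increasing_on D) gs ->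
  is_lub (feasible_values D gs) (eta_OPT D gs).
Proof. intros HD Hgs. unfold eta_OPT. apply epsilon_spec.
  destruct (completeness (feasible_values D gs)) as [m Hm].
  - exists (fold_right (fun g acc => Rmax 0 (g D) + acc) 0 gs).
    intros y (v & Hl & Hn & Hs & ->). apply obj_bound; auto.
    apply bounded_entries; auto.
  - exists (objective gs (repeat 0 (length gs))). exists (repeat 0 (length gs)).
    split; [apply repeat_length|]. split; [apply Forall_forall; intros z Hz;
      apply repeat_spec in Hz; lra|]. split; auto.
    clear Hgs. induction (length gs); simpl; lra.
  - exists m; exact Hm.
Qed.

Lemma split_len {T} (v : list T) n k : length v = (n + k)%nat ->
  exists x y, v = x ++ y /\ length x = n /\ length y = k.
Proof. intros H. exists (firstn n v), (skipn n v). split; [symmetry; apply firstn_skipn|].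
  rewrite firstn_length, skipn_length. lia. Qed.

Lemma key D A a b : 0 <= D -> Forall (concave_on D) A -> Forall (increasing_on D) A ->
  increasing_on D a -> increasing_on D b ->
  eta_OPT D (A ++ [a]) - eta_OPT D A >= eta_OPT D (A ++ [b; a]) - eta_OPT D (A ++ [b]).
Proof.
  intros HD HcA HiA Ha Hb.
  assert (Fa : Forall (increasing_on D) (A ++ [a])) by (apply Forall_app; auto).
  assert (Fb : Forall (increasing_on D) (A ++ [b])) by (apply Forall_app; auto).
  assert (Fba : Forall (increasing_on D) (A ++ [b; a])) by (apply Forall_app; auto).
  destruct (eta_lub D _ HD Fa) as [Ua _].
  destruct (eta_lub D _ HD Fb) as [Ub _].
  destruct (eta_lub D _ HD Fba) as [_ Lba].
  destruct (eta_lub D _ HD HiA) as [_ LA].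
  set (Ea := eta_OPT D (A ++ [a])) in *.
  set (Eb := eta_OPT D (A ++ [b])) in *.
  assert (Main : forall y1 y2, feasible_values D (A ++ [b; a]) y1 ->
     feasible_values D A y2 -> y1 + y2 <= Ea + Eb).
  { intros y1 y2 (v & Hl & Hn & Hs & ->) (y & Hly & Hny & Hsy & ->).
    rewrite length_app in Hl; simpl in Hl.
    destruct (split_len v (length A) 2 Hl) as (x & w & -> & Hlx & Hlw).
    destruct w as [|q [|p [|]]]; simpl in Hlw; try lia.
    apply Forall_app in Hn as [Hnx Hnw]. inversion Hnw as [|? ? Hq Hnw']; subst.
    inversion Hnw' as [|? ? Hp _]; subst.
    fold (sumR (x ++ [q; p])) in Hs. fold (sumR y) in Hsy.
    rewrite sumR_app in Hs. unfold sumR at 2 in Hs; simpl in Hs.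
    rewrite obj_app by auto.
    assert (Eo : objective [b; a] [q; p] = b q + a p) by (unfold objective; simpl; ring).
    rewrite Eo.
    assert (Ga : forall u, length u = length A -> Forall (fun z => 0 <= z) u ->
       sumR u + p <= D -> objective A u + a p <= Ea).
    { intros u Hu Hnu Hsu. apply Ua. exists (u ++ [p]). repeat split.
      - rewrite !length_app; simpl; lia.
      - apply Forall_app; auto.
      - fold (sumR (u ++ [p])). rewrite sumR_app. unfold sumR at 2; simpl. lra.
      - rewrite obj_app by auto. f_equal. unfold objective; simpl; ring. }
    assert (Gb : forall u, length u = length A -> Forall (fun z => 0 <= z) u ->
       sumR u + q <= D -> objective A u + b q <= Eb).
    { intros u Hu Hnu Hsu. apply Ub. exists (u ++ [q]). repeat split.
      - rewrite !length_app; simpl; lia.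
      - apply Forall_app; auto.
      - fold (sumR (u ++ [q])). rewrite sumR_app. unfold sumR at 2; simpl. lra.
      - rewrite obj_app by auto. f_equal. unfold objective; simpl; ring. }
    pose proof (sumR_nonneg x Hnx). pose proof (sumR_nonneg y Hny).
    destruct (Rle_dec (sumR y) (sumR x)) as [Hle|Hlt].
    - pose proof (Ga y Hly Hny ltac:(lra)). pose proof (Gb x Hlx Hnx ltac:(lra)). lra.
    - set (X := sumR x) in *. set (Y := sumR y) in *.
      assert (Hl' : exists l, 0 <= l <= 1 /\ Y + p - D <= l * (Y - X) /\
                 X + l * (Y - X) + q <= D).
      { destruct (Rle_dec (Y + p - D) 0).
        - exists 0. lra.
        - exists ((Y + p - D) / (Y - X)).
          assert (E : (Y + p - D) / (Y - X) * (Y - X) = Y + p - D) by (field; lra).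
          rewrite E. split; [split|lra].
          + apply Rmult_le_pos; [lra|]. apply Rlt_le, Rinv_0_lt_compat; lra.
          + apply (Rmult_le_reg_r (Y - X)); lra. }
      destruct Hl' as (l & Hl01 & H1 & H2).
      assert (Bx := bounded_entries D x Hnx ltac:(unfold X in *; lra)).
      assert (By := bounded_entries D y Hny Hsy).
      pose proof (comb_obj D A l Hl01 HcA x y Hlx Hly Bx By).
      assert (Lu : length (comb l x y) = length A) by (rewrite comb_length; lia).
      assert (Lw : length (comb (1 - l) x y) = length A) by (rewrite comb_length; lia).
      pose proof (Ga (comb l x y) Lu (comb_nonneg l x y Hl01 Hnx Hny)
        ltac:(rewrite comb_sum by lia; fold X Y; lra)).
      pose proof (Gb (comb (1 - l) x y) Lw (comb_nonneg (1 - l) x y ltac:(lra) Hnx Hny)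
        ltac:(rewrite comb_sum by lia; fold X Y; lra)).
      lra. }
  assert (forall y2, feasible_values D A y2 -> y2 <= Ea + Eb - eta_OPT D (A ++ [b; a])).
  { intros y2 Hy2. assert (eta_OPT D (A ++ [b; a]) <= Ea + Eb - y2).
    { apply Lba. intros y1 Hy1. pose proof (Main y1 y2 Hy1 Hy2). lra. } lra. }
  assert (eta_OPT D A <= Ea + Eb - eta_OPT D (A ++ [b; a])) by (apply LA; exact H).
  lra.
Qed.

Lemma firstn_app_len {T} (A l : list T) : firstn (length A) (A ++ l) = A.
Proof. induction A; simpl; f_equal; auto. Qed.
Lemma firstn_app_len_S {T} (A : list T) x l : firstn (S (length A)) (A ++ x :: l) = A ++ [x].
Proof. induction A; simpl; f_equal; auto. Qed.
Lemma firstn_app_len_SS {T} (A : list T) x y l :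
  firstn (S (S (length A))) (A ++ x :: y :: l) = A ++ [x; y].
Proof. induction A; simpl; f_equal; auto. Qed.
Lemma skipn_app_len_SS {T} (A : list T) x y l : skipn (S (S (length A))) (A ++ x :: y :: l) = l.
Proof. induction A; simpl; auto. Qed.
Lemma nth_app_len {T} (A : list T) l n d : nth (length A + n) (A ++ l) d = nth n l d.
Proof. induction A; simpl; auto. Qed.
Lemma nth_app_len0 {T} (A : list T) x l d : nth (length A) (A ++ x :: l) d = x.
Proof. induction A; simpl; auto. Qed.

Theorem lemma3 (D m M : R) (hD : 0 < D) (hm : 0 < m) (hmM : m <= M)
  (sigma : list (R -> R)) (hG : forall g, In g sigma -> inG D m M g)
  (tau : nat) (htau1 : (1 <= tau)%nat) (htau2 : (tau <= length sigma - 1)%nat) :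
  eta_OPT D (firstn tau sigma) - eta_OPT D (firstn (tau - 1) sigma)
  >= eta_OPT D (firstn (tau + 1) (swap_at tau sigma))
     - eta_OPT D (firstn tau (swap_at tau sigma)).
Proof.
  assert (Hl : length sigma = ((tau - 1) + (2 + (length sigma - tau - 1)))%nat) by lia.
  destruct (split_len sigma _ _ Hl) as (A & w & Hs & HA & Hw).
  destruct w as [|a [|b rest]]; simpl in Hw; try lia.
  assert (Ht : tau = S (length A)) by lia. subst tau sigma.
  replace (S (length A) - 1)%nat with (length A) by lia.
  replace (S (length A) + 1)%nat with (S (S (length A))) by lia.
  assert (Sw : swap_at (S (length A)) (A ++ a :: b :: rest) = A ++ b :: a :: rest).
  { unfold swap_at. replace (S (length A) - 1)%nat with (length A) by lia.
    replace (S (length A) + 1)%nat with (S (S (length A))) by lia.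
    rewrite firstn_app_len, skipn_app_len_SS.
    replace (S (length A)) with (length A + 1)%nat by lia.
    rewrite nth_app_len, nth_app_len0. reflexivity. }
  rewrite Sw, firstn_app_len_S, firstn_app_len, firstn_app_len_SS, firstn_app_len_S.
  assert (Hin : forall g, In g (A ++ a :: b :: rest) -> concave_on D g /\ increasing_on D g).
  { intros g Hg. destruct (hG g Hg) as (H1 & H2 & _). auto. }
  apply key.
  - lra.
  - apply Forall_forall. intros g Hg. apply Hin, in_or_app; auto.
  - apply Forall_forall. intros g Hg. apply Hin, in_or_app; auto.
  - apply Hin, in_or_app; simpl; auto.
  - apply Hin, in_or_app; simpl; auto.
Qed.
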